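(* Consider the fully discrete implicit variable-step BDF2 scheme described in the context and let $\{u^n\}$ be its solution. Suppose the time-step ratios satisfy $r_k\le r_s$ for $2\le k\le N$ and \[ \tau_n<4\delta\min\Big\{R_L(r_n,r_{n+1}),\ \frac{2+r_2}{1+r_2}\Big\},\qquad 1\le n\le N, \] where $R_L(z,s)=\frac{2+4z-z^{3/2}}{1+z}-\frac{s^{3/2}}{1+s}$ (with $r_1:=0$). Then there is a constant $C_0$, independent of the spatial step $h$ and the time steps $\tau_n$, such that \[ \max\{\|\nabla_hu^n\|,\ \|\nabla_hu^n\|_{l^4},\ \|\Delta_hu^n\|\}\le C_0 . \]
   Context: Let $L>0$, $\Omega=(0,L)^2$, $M$ a positive integer, $h=L/M$, $x_i=ih$, $y_j=jh$, $\Omega_h=\{(x_i,y_j):1\le i,j\le M\}$, $\bar\Omega_h=\{(x_i,y_j):0\le i,j\le M\}$, and $\mathbb{V}_h$ the space of grid functions on $\bar\Omega_h$ that are $L$-periodic in each direction. For $v\in\mathbb{V}_h$: $\delta_x v_{i+1/2,j}=(v_{i+1,j}-v_{ij})/h$, $\Delta_x v_{ij}=(v_{i+1,j}-v_{i-1,j})/(2h)$, $\delta_x^2 v_{ij}=(\delta_xv_{i+1/2,j}-\delta_xv_{i-1/2,j})/h$, and analogously in $y$; $\Delta_h=\delta_x^2+\delta_y^2$, $\nabla_h v_{ij}=(\Delta_x v_{ij},\Delta_y v_{ij})^T$, and for a vector grid function $\mathbf{g}=(g_1,g_2)$, $\nabla_h\cdot \mathbf g=\Delta_x g_1+\Delta_y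 g_2$. Inner product $\langle v,w\rangle=h^2\sum_{\mathrm{x}_h\in\Omega_h}v_hw_h$, $\|v\|=\sqrt{\langle v,v\rangle}$, $\|v\|_{l^q}=(h^2\sum_{\mathrm{x}_h\in\Omega_h}|v_h|^q)^{1/q}$; for vector grid functions the pointwise Euclidean norm is used inside. Let $f(\mathbf{v})=(|\mathbf v|^2-1)\mathbf v$ and $\delta>0$. Time levels $0=t_0<t_1<\dots<t_N=T$, $\tau_n=t_n-t_{n-1}$, $r_n=\tau_n/\tau_{n-1}$ ($2\le n\le N$); $r_{N+1}\in(0,r_s]$ is an auxiliary ratio. $\nabla_\tau v^n=v^n-v^{n-1}$. BDF2 kernels: $b_0^{(1)}=2/\tau_1$, and for $n\ge2$, $b_0^{(n)}=\frac{1+2r_n}{\tau_n(1+r_n)}$, $b_1^{(n)}=-\frac{r_n^2}{\tau_n(1+r_n)}$, $b_j^{(n)}=0$ for $j\ge2$; $D_2v^n=\sum_{k=1}^n b_{n-k}^{(n)}\nabla_\tau v^k$. The scheme is: $D_2u_h^n+\delta\Delta_h^2u_h^n-\nabla_h\cdot f(\nabla_hu_h^n)=0$ for $\mathrm{x}_h\in\Omega_h$, $1\le n\le N$, with $u_h^0=\varphi_0(\mathrm{x}_h)-\frac{\tau_1}{2}\varphi_1(\mathrm{x}_h)$, $\varphi_1=\nabla\cdot f(\nabla\varphi_0)-\delta\Delta^2\varphi_0$ for given periodic smooth data $\varphi_0\in H^4(\Omega)$. $r_s$ is a fixed constant with $0<r_s<4.864$. *)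

(* Defs.v *)
From Stdlib Require Import Reals Lra Lia ZArith.
From Coquelicot Require Import Coquelicot.
Open Scope R_scope.

Definition pdx (f : R -> R -> R) : R -> R -> R := fun x y => Derive (fun t => f t y) x.
Definition pdy (f : R -> R -> R) : R -> R -> R := fun x y => Derive (fun t => f x t) y.

(* iterated partial derivative: true = d/dx, false = d/dy (applied right to left) *)
Fixpoint pderiv (w : list bool) (f : R -> R -> R) : R -> R -> R :=
  match w with
  | nil => f
  | cons b w' => (if b then pdx else pdy) (pderiv w' f)
  end.

Definition smooth2 (f : R -> R -> R) : Prop :=
  forall (w : list bool) (x y : R),
    ex_derive (fun t => pderiv w f t y) x /\
    ex_derive (fun t => pderiv w f x t) y /\
    continuous (fun p : R * R => pderiv w f (fst p) (snd p)) (x, y).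

Definition periodic2 (L : R) (f : R -> R -> R) : Prop :=
  forall x y, f (x + L) y = f x y /\ f x (y + L) = f x y.

Definition cLap (f : R -> R -> R) : R -> R -> R :=
  fun x y => pdx (pdx f) x y + pdy (pdy f) x y.

Definition phi1 (delta : R) (phi0 : R -> R -> R) : R -> R -> R :=
  fun x y =>
    pdx (fun a b => (pdx phi0 a b ^ 2 + pdy phi0 a b ^ 2 - 1) * pdx phi0 a b) x y
  + pdy (fun a b => (pdx phi0 a b ^ 2 + pdy phi0 a b ^ 2 - 1) * pdy phi0 a b) x y
  - delta * cLap (cLap phi0) x y.

Definition grid := Z -> Z -> R.

Definition gperiodic (M : nat) (v : grid) : Prop :=
  forall i j : Z, v (i + Z.of_nat M)%Z j = v i j /\ v i (j + Z.of_nat M)%Z = v i j.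

Definition Dcx (h : R) (v : grid) : grid :=
  fun i j => (v (i + 1)%Z j - v (i - 1)%Z j) / (2 * h).
Definition Dcy (h : R) (v : grid) : grid :=
  fun i j => (v i (j + 1)%Z - v i (j - 1)%Z) / (2 * h).

Definition d2x (h : R) (v : grid) : grid :=
  fun i j => ((v (i + 1)%Z j - v i j) / h - (v i j - v (i - 1)%Z j) / h) / h.
Definition d2y (h : R) (v : grid) : grid :=
  fun i j => ((v i (j + 1)%Z - v i j) / h - (v i j - v i (j - 1)%Z) / h) / h.
Definition Lap_h (h : R) (v : grid) : grid := fun i j => d2x h v i j + d2y h v i j.

Definition divf_h (h : R) (v : grid) : grid :=
  let g1 := fun i j => (Dcx h v i j ^ 2 + Dcy h v i j ^ 2 - 1) * Dcx h v i j in
  let g2 := fun i j => (Dcx h v i j ^ 2 + Dcy h v i j ^ 2 - 1) * Dcy h v i j in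
  fun i j => Dcx h g1 i j + Dcy h g2 i j.

Definition gsum (M : nat) (h : R) (F : grid) : R :=
  h ^ 2 * sum_f_R0 (fun a => sum_f_R0 (fun b =>
            F (Z.of_nat a + 1)%Z (Z.of_nat b + 1)%Z) (M - 1)) (M - 1).

Definition norm_grad (M : nat) (h : R) (v : grid) : R :=
  sqrt (gsum M h (fun i j => Dcx h v i j ^ 2 + Dcy h v i j ^ 2)).
Definition norm4_grad (M : nat) (h : R) (v : grid) : R :=
  sqrt (sqrt (gsum M h (fun i j => (Dcx h v i j ^ 2 + Dcy h v i j ^ 2) ^ 2))).
Definition norm_lap (M : nat) (h : R) (v : grid) : R :=
  sqrt (gsum M h (fun i j => Lap_h h v i j ^ 2)).

(* r_1 := 0, r_n = tau_n / tau_{n-1} for 2 <= n <= N, r_{N+1} := rN1 (auxiliary) *)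
Definition ratio (tau : nat -> R) (N : nat) (rN1 : R) (n : nat) : R :=
  if Nat.leb n 1 then 0
  else if Nat.eqb n (S N) then rN1
  else tau n / tau (n - 1)%nat.

(* z^{3/2} for z >= 0 *)
Definition pow32 (z : R) : R := z * sqrt z.

Definition R_L (z s : R) : R :=
  (2 + 4 * z - pow32 z) / (1 + z) - pow32 s / (1 + s).

Definition D2 (tau : nat -> R) (u : nat -> grid) (n : nat) : grid :=
  fun i j =>
    match n with
    | O => 0
    | S O => 2 / tau 1%nat * (u 1%nat i j - u 0%nat i j)
    | S (S m as k) =>
        let rn := tau n / tau k in
        (1 + 2 * rn) / (tau n * (1 + rn)) * (u n i j - u k i j)
        - rn ^ 2 / (tau n * (1 + rn)) * (u k i j - u m i j)
    end.

(* Main.v *)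
Require Import Defs.
From Stdlib Require Import Reals ZArith.
From Coquelicot Require Import Coquelicot.
From Stdlib Require Import Lra Lia Psatz List FunctionalExtensionality ClassicalEpsilon Classical.
Open Scope R_scope.

Section Ana.
Variable L : R.
Hypothesis HL : 0 < L.

Definition Pr (F : R -> R -> R) : Prop :=
  periodic2 L F /\ forall x y, ex_derive (fun t => F t y) x /\ ex_derive (fun t => F x t) y /\
    continuous (fun p : R * R => F (fst p) (snd p)) (x, y).

Definition Good F := forall w, Pr (pderiv w F).
Definition GoodN n F := forall w, (length w <= n)%nat -> Pr (pderiv w F).

Definition db (b : bool) := if b then pdx else pdy.

Lemma pderiv_cons b w F : pderiv (b :: w) F = db b (pderiv w F).
Proof. reflexivity. Qed.

Lemma pderiv_app w1 w2 F : pderiv (w1 ++ w2) F = pderiv w1 (pderiv w2 F).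
Proof. induction w1 as [|b w IH]; simpl; [reflexivity| rewrite IH; reflexivity]. Qed.

Lemma Pr_plus F G : Pr F -> Pr G -> Pr (fun x y => F x y + G x y).
Proof.
  intros [pF dF] [pG dG]; split.
  - intros x y; destruct (pF x y), (pG x y); split; congruence.
  - intros x y; destruct (dF x y) as (a1&a2&a3), (dG x y) as (b1&b2&b3).
    split; [|split].
    + exact (ex_derive_plus _ _ _ a1 b1).
    + exact (ex_derive_plus _ _ _ a2 b2).
    + exact (continuous_plus _ _ _ a3 b3).
Qed.

Lemma Pr_mult F G : Pr F -> Pr G -> Pr (fun x y => F x y * G x y).
Proof.
  intros [pF dF] [pG dG]; split.
  - intros x y; destruct (pF x y), (pG x y); split; congruence.
  - intros x y; destruct (dF x y) as (a1&a2&a3), (dG x y) as (b1&b2&b3).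
    split; [|split].
    + exact (ex_derive_mult _ _ _ a1 b1).
    + exact (ex_derive_mult _ _ _ a2 b2).
    + exact (@continuous_mult _ R_AbsRing _ _ _ a3 b3).
Qed.

Lemma Pr_const c : Pr (fun _ _ => c).
Proof.
  split; [intros; split; reflexivity|].
  intros x y; split; [|split].
  - apply (@ex_derive_const R_AbsRing R_NormedModule).
  - apply (@ex_derive_const R_AbsRing R_NormedModule).
  - apply continuous_const.
Qed.

Lemma db_plus b F G : (forall x y, ex_derive (fun t => F t y) x /\ ex_derive (fun t => F x t) y) ->
  (forall x y, ex_derive (fun t => G t y) x /\ ex_derive (fun t => G x t) y) ->
  db b (fun x y => F x y + G x y) = (fun x y => db b F x y + db b G x y).
Proof.
  intros HF HG; apply functional_extensionality; intro x; apply functional_extensionality; intro y.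
  destruct (HF x y), (HG x y); destruct b; simpl; unfold pdx, pdy;
  apply (Derive_plus (fun t => _) (fun t => _)); assumption.
Qed.

Lemma db_mult b F G : (forall x y, ex_derive (fun t => F t y) x /\ ex_derive (fun t => F x t) y) ->
  (forall x y, ex_derive (fun t => G t y) x /\ ex_derive (fun t => G x t) y) ->
  db b (fun x y => F x y * G x y) = (fun x y => db b F x y * G x y + F x y * db b G x y).
Proof.
  intros HF HG; apply functional_extensionality; intro x; apply functional_extensionality; intro y.
  destruct (HF x y), (HG x y); destruct b; simpl; unfold pdx, pdy;
  apply (Derive_mult (fun t => _) (fun t => _)); assumption.
Qed.

Lemma Pr_der F : Pr F -> forall x y, ex_derive (fun t => F t y) x /\ ex_derive (fun t => F x t) y.
Proof. intros [_ H] x y; destruct (H x y) as (?&?&?); split; assumption. Qed.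

Lemma pderiv_plus F G : forall w, (forall v, (length v < length w)%nat -> Pr (pderiv v F) /\ Pr (pderiv v G)) ->
  pderiv w (fun x y => F x y + G x y) = (fun x y => pderiv w F x y + pderiv w G x y).
Proof.
  induction w as [|b w IH]; intros H; [reflexivity|].
  rewrite !pderiv_cons, IH.
  - destruct (H w) as [H1 H2]; [simpl; lia|].
    apply db_plus; apply Pr_der; assumption.
  - intros v Hv; apply H; simpl; lia.
Qed.

Lemma GoodN_plus n F G : GoodN n F -> GoodN n G -> GoodN n (fun x y => F x y + G x y).
Proof.
  intros HF HG w Hw. rewrite pderiv_plus.
  - apply Pr_plus; [apply HF|apply HG]; lia.
  - intros v Hv; split; [apply HF|apply HG]; lia.
Qed.

Lemma GoodN_db n b F : GoodN (S n) F -> GoodN n (db b F).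
Proof.
  intros H w Hw. change (db b F) with (pderiv (b :: nil) F). rewrite <- pderiv_app.
  apply H. rewrite app_length; simpl; lia.
Qed.

Lemma GoodN_weak n F : GoodN (S n) F -> GoodN n F.
Proof. intros H w Hw; apply H; lia. Qed.

Lemma GoodN_mult : forall n F G, GoodN n F -> GoodN n G -> GoodN n (fun x y => F x y * G x y).
Proof.
  induction n as [|n IH]; intros F G HF HG w Hw.
  - destruct w; [|simpl in Hw; lia]. apply Pr_mult; [apply (HF nil)|apply (HG nil)]; simpl; lia.
  - induction w as [|b w' _] using rev_ind.
    + apply Pr_mult; [apply (HF nil)|apply (HG nil)]; simpl; lia.
    + rewrite length_app in Hw; simpl in Hw.
      rewrite pderiv_app. change (pderiv (b :: nil) (fun x y => F x y * G x y)) with (db b (pderiv nil (fun x y => F x y * G x y))). simpl pderiv at 2.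

      rewrite db_mult by (apply Pr_der; first [apply (HF nil) | apply (HG nil)]; simpl; lia).
      apply (GoodN_plus n); [apply IH|apply IH|]; try lia.
      * apply GoodN_db; assumption.
      * apply GoodN_weak; assumption.
      * apply GoodN_weak; assumption.
      * apply GoodN_db; assumption.
Qed.

Lemma Good_GoodN F : Good F <-> forall n, GoodN n F.
Proof. split; [intros H n w _; apply H| intros H w; apply (H (length w)); lia]. Qed.

Lemma Good_plus F G : Good F -> Good G -> Good (fun x y => F x y + G x y).
Proof. rewrite !Good_GoodN; intros; apply GoodN_plus; auto. Qed.

Lemma Good_mult F G : Good F -> Good G -> Good (fun x y => F x y * G x y).
Proof. rewrite !Good_GoodN; intros; apply GoodN_mult; auto. Qed.

Lemma Good_db b F : Good F -> Good (db b F).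
Proof. rewrite !Good_GoodN; intros H n; apply GoodN_db, H. Qed.

Lemma Good_ext F G : Good F -> (forall x y, F x y = G x y) -> Good G.
Proof.
  intros H E; replace G with F; [assumption|].
  apply functional_extensionality; intro; apply functional_extensionality; intro; apply E.
Qed.

Lemma pderiv_const : forall w c, exists c', pderiv w (fun _ _ => c) = (fun _ _ => c').
Proof.
  induction w as [|b w IH]; intros c; [exists c; reflexivity|].
  destruct (IH c) as [c' E]; exists 0; rewrite pderiv_cons, E.
  apply functional_extensionality; intro; apply functional_extensionality; intro.
  destruct b; simpl; unfold pdx, pdy; apply Derive_const.
Qed.

Lemma Good_const c : Good (fun _ _ => c).
Proof. intros w; destruct (pderiv_const w c) as [c' ->]; apply Pr_const. Qed.


Lemma is_derive_shift x a : is_derive (fun t => t + a) x 1.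
Proof.
  apply (proj2 (is_derive_Reals _ _ _)). replace 1 with (1 + 0) by ring.
  apply (derivable_pt_lim_plus (fun t => t) (fun _ => a)); [apply derivable_pt_lim_id| apply derivable_pt_lim_const].
Qed.
Lemma Derive_shift (f : R -> R) x a : ex_derive f (x + a) -> Derive (fun t => f (t + a)) x = Derive f (x + a).
Proof.
  intros H. rewrite (Derive_comp f (fun t => t + a)); [| exact H | exists 1; apply is_derive_shift].
  replace (Derive (fun t => t + a) x) with 1 by (symmetry; apply is_derive_unique; apply is_derive_shift). ring.
Qed.

Lemma per_db b F : periodic2 L F -> (forall x y, ex_derive (fun t => F t y) x /\ ex_derive (fun t => F x t) y) ->
  periodic2 L (db b F).
Proof.
  intros P D x y; destruct b; simpl; unfold pdx, pdy; split.
  - rewrite <- (Derive_shift (fun t => F t y) x L) by exact (proj1 (D (x + L) y)).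
    apply Derive_ext; intro t; exact (proj1 (P t y)).
  - apply Derive_ext; intro t; exact (proj2 (P t y)).
  - apply Derive_ext; intro t; exact (proj1 (P x t)).
  - rewrite <- (Derive_shift (fun t => F x t) y L) by exact (proj2 (D x (y + L))).
    apply Derive_ext; intro t; exact (proj2 (P x t)).
Qed.

Lemma Good_smooth F : smooth2 F -> periodic2 L F -> Good F.
Proof.
  intros S P w; split.
  - induction w as [|b w IH]; [exact P|].
    rewrite pderiv_cons; apply per_db; [exact IH|].
    intros x y; destruct (S w x y) as (?&?&?); split; assumption.
  - intros x y; apply S.
Qed.

Lemma Good_minus F G : Good F -> Good G -> Good (fun x y => F x y - G x y).
Proof.
  intros HF HG. apply (Good_ext (fun x y => F x y + (fun _ _ => -1) x y * G x y)).
  - apply Good_plus; [assumption|]. apply Good_mult; [apply Good_const|assumption].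
  - intros; ring.
Qed.

Lemma Good_pdx F : Good F -> Good (pdx F).
Proof. apply (Good_db true). Qed.
Lemma Good_pdy F : Good F -> Good (pdy F).
Proof. apply (Good_db false). Qed.

Lemma Good_phi1 delta phi0 : Good phi0 -> Good (phi1 delta phi0).
Proof.
  intros H. unfold phi1.
  assert (HX := Good_pdx _ H). assert (HY := Good_pdy _ H).
  assert (HP : Good (fun a b => pdx phi0 a b ^ 2 + pdy phi0 a b ^ 2 - 1)).
  { apply (Good_ext (fun a b => pdx phi0 a b * pdx phi0 a b + pdy phi0 a b * pdy phi0 a b - (fun _ _ => 1) a b)).
    - apply Good_minus; [apply Good_plus; apply Good_mult; assumption| apply Good_const].
    - intros; simpl; ring. }
  apply Good_minus; [apply Good_plus|].
  - apply Good_pdx, Good_mult; assumption.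
  - apply Good_pdy, Good_mult; assumption.
  - apply (Good_ext (fun x y => (fun _ _ => delta) x y * cLap (cLap phi0) x y)); [|reflexivity].
    apply Good_mult; [apply Good_const|].
    assert (HC : forall F, Good F -> Good (cLap F)).
    { intros F HF; unfold cLap; apply Good_plus.
      - apply Good_pdx, Good_pdx, HF.
      - apply Good_pdy, Good_pdy, HF. }
    apply HC, HC, H.
Qed.

Lemma per1_nat (g : R -> R) : (forall t, g (t + L) = g t) ->
  forall n t, g (t + INR n * L) = g t /\ g (t - INR n * L) = g t.
Proof.
  intros P; induction n as [|n IH]; intros t.
  - simpl; split; f_equal; ring.
  - rewrite S_INR; split.
    + replace (t + (INR n + 1) * L) with ((t + INR n * L) + L) by ring. rewrite P; apply IH.
    + rewrite <- (P (t - (INR n + 1) * L)). replace (t - (INR n + 1) * L + L) with (t - INR n * L) by ring.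
      apply IH.
Qed.

Lemma per1_Z (g : R -> R) : (forall t, g (t + L) = g t) ->
  forall k t, g (t - IZR k * L) = g t.
Proof.
  intros P k t. destruct (Z_le_gt_dec 0 k) as [Hk|Hk].
  - rewrite <- (Z2Nat.id k Hk), <- INR_IZR_INZ. apply per1_nat; assumption.
  - replace k with (- Z.of_nat (Z.to_nat (- k)))%Z by (rewrite Z2Nat.id; lia).
    rewrite opp_IZR, <- INR_IZR_INZ. replace (t - - INR (Z.to_nat (- k)) * L) with (t + INR (Z.to_nat (- k)) * L) by ring.
    apply per1_nat; assumption.
Qed.

Lemma per1_red (g : R -> R) : (forall t, g (t + L) = g t) -> forall x, exists x', 0 <= x' <= L /\ g x = g x'.
Proof.
  intros P x. destruct (archimed (x / L)) as [H1 H2].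
  exists (x - IZR (up (x / L) - 1) * L). split.
  - rewrite minus_IZR. assert (Ex : x = (x / L) * L) by (field; lra).
    set (q := x / L) in *. set (k := IZR (up q)) in *. rewrite Ex. split; nra.
  - rewrite per1_Z; auto.
Qed.

Lemma Pr_bounded F : Pr F -> exists K, forall x y, Rabs (F x y) <= K.
Proof.
  intros [P D].
  assert (HC : forall x y, exists d : posreal, forall u v, Rabs (u - x) < d -> Rabs (v - y) < d ->
     Rabs (F u v - F x y) < 1).
  { intros x y. destruct (D x y) as (_&_&C).
    apply continuity_2d_pt_filterlim in C. exact (C (mkposreal 1 Rlt_0_1)). }
  set (delta := fun t : Compactness.Tn 2 R =>
     proj1_sig (constructive_indefinite_description _ (HC (fst t) (fst (snd t))))).
  assert (Hd : forall t u v, Rabs (u - fst t) < delta t -> Rabs (v - fst (snd t)) < delta t ->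
     Rabs (F u v - F (fst t) (fst (snd t))) < 1).
  { intros t; unfold delta; destruct (constructive_indefinite_description _ _) as [d Hd]; simpl; apply Hd. }
  apply NNPP; intro Hn.
  apply (compactness_list 2 (0, (0, tt)) (L, (L, tt)) delta). intros [l Hl]. apply Hn.
  exists (fold_right (fun t acc => Rmax (Rabs (F (fst t) (fst (snd t))) + 1) acc) 0 l).
  assert (Hin : forall t, In t l -> Rabs (F (fst t) (fst (snd t))) + 1 <=
     fold_right (fun t acc => Rmax (Rabs (F (fst t) (fst (snd t))) + 1) acc) 0 l).
  { clear. induction l as [|a l IH]; simpl; [tauto|]. intros t [->|Ht].
    - apply Rmax_l.
    - eapply Rle_trans; [apply IH, Ht| apply Rmax_r]. }
  assert (Hbox : forall x y, 0 <= x <= L -> 0 <= y <= L -> Rabs (F x y) <=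
     fold_right (fun t acc => Rmax (Rabs (F (fst t) (fst (snd t))) + 1) acc) 0 l).
  { intros x y Hx Hy. destruct (Hl (x, (y, tt))) as [t [Ht1 [_ Ht3]]].
    - simpl; tauto.
    - destruct t as [t1 [t2 []]]. simpl in Ht3. destruct Ht3 as [c1 [c2 _]].
      specialize (Hd (t1, (t2, tt)) x y c1 c2). specialize (Hin _ Ht1). simpl in Hd, Hin.
      apply Rabs_def2 in Hd. destruct Hd. 
      assert (Rabs (F x y) <= Rabs (F t1 t2) + 1); [|lra].
      unfold Rabs at 1; destruct (Rcase_abs (F x y)); [|]; 
      unfold Rabs; destruct (Rcase_abs (F t1 t2)); lra. }
  intros x y.
  destruct (per1_red (fun t => F t y) (fun t => proj1 (P t y)) x) as [x' [Hx' E1]].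
  destruct (per1_red (fun t => F x' t) (fun t => proj2 (P x' t)) y) as [y' [Hy' E2]].
  simpl in E1, E2. rewrite E1, E2. apply Hbox; assumption.
Qed.

Lemma Good_bounded F w : Good F -> exists K, forall x y, Rabs (pderiv w F x y) <= K.
Proof. intros H; apply Pr_bounded, H. Qed.

Lemma mvt_bound (phi phi' : R -> R) K a b : a < b -> (forall t, is_derive phi t (phi' t)) ->
  (forall t, Rabs (phi' t) <= K) -> Rabs (phi b - phi a) <= K * (b - a).
Proof.
  intros Hab Hd HK. destruct (MVT_cor2 phi phi' a b Hab) as [c [E _]].
  - intros c _; apply (proj1 (is_derive_Reals _ _ _)), Hd.
  - rewrite E, Rabs_mult, (Rabs_right (b - a)) by lra. apply Rmult_le_compat_r; [lra|apply HK].
Qed.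

Lemma second_diff (phi phi' phi'' : R -> R) K x h : 0 < h ->
  (forall t, is_derive phi t (phi' t)) -> (forall t, is_derive phi' t (phi'' t)) ->
  (forall t, Rabs (phi'' t) <= K) -> Rabs (phi (x + h) - 2 * phi x + phi (x - h)) <= 2 * h ^ 2 * K.
Proof.
  intros Hh D1 D2 HK.
  destruct (MVT_cor2 phi phi' x (x + h)) as [c1 [E1 C1]]; [lra| intros c _; apply (proj1 (is_derive_Reals _ _ _)), D1|].
  destruct (MVT_cor2 phi phi' (x - h) x) as [c2 [E2 C2]]; [lra| intros c _; apply (proj1 (is_derive_Reals _ _ _)), D1|].
  replace (phi (x + h) - 2 * phi x + phi (x - h)) with (h * (phi' c1 - phi' c2)) by
    (replace (phi' c1) with ((phi (x + h) - phi x) / h) by (rewrite E1; field; lra);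
     replace (phi' c2) with ((phi x - phi (x - h)) / h) by (rewrite E2; field; lra); field; lra).
  rewrite Rabs_mult, Rabs_right by lra.
  assert (Rabs (phi' c1 - phi' c2) <= K * (c1 - c2)) by (apply (mvt_bound phi' phi''); auto; lra).
  assert (0 <= K) by (specialize (HK x); pose proof (Rabs_pos (phi'' x)); lra).
  assert (K * (c1 - c2) <= K * (2 * h)) by (apply Rmult_le_compat_l; lra).
  assert (h * Rabs (phi' c1 - phi' c2) <= h * (K * (2 * h))) by (apply Rmult_le_compat_l; lra).
  replace (2 * h ^ 2 * K) with (h * (K * (2 * h))) by ring. exact H2.
Qed.

Lemma Good_diffs F : Good F -> exists K, 0 <= K /\ forall x y h, 0 < h ->
  Rabs (F (x + h) y - F (x - h) y) <= 2 * h * K /\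
  Rabs (F x (y + h) - F x (y - h)) <= 2 * h * K /\
  Rabs (F (x + h) y - 2 * F x y + F (x - h) y) <= 2 * h ^ 2 * K /\
  Rabs (F x (y + h) - 2 * F x y + F x (y - h)) <= 2 * h ^ 2 * K.
Proof.
  intros G.
  destruct (Good_bounded F (true :: nil) G) as [K1 H1].
  destruct (Good_bounded F (false :: nil) G) as [K2 H2].
  destruct (Good_bounded F (true :: true :: nil) G) as [K3 H3].
  destruct (Good_bounded F (false :: false :: nil) G) as [K4 H4].
  simpl in H1, H2, H3, H4.
  set (K := Rmax (Rmax K1 K2) (Rmax K3 K4)).
  assert (B1 : K1 <= K) by (unfold K; eapply Rle_trans; [apply Rmax_l|apply Rmax_l]).
  assert (B2 : K2 <= K) by (unfold K; eapply Rle_trans; [apply Rmax_r|apply Rmax_l]).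
  assert (B3 : K3 <= K) by (unfold K; eapply Rle_trans; [apply Rmax_l|apply Rmax_r]).
  assert (B4 : K4 <= K) by (unfold K; eapply Rle_trans; [apply Rmax_r|apply Rmax_r]).
  assert (K0 : 0 <= K1) by (specialize (H1 0 0); pose proof (Rabs_pos (pdx F 0 0)); lra).
  exists K; split; [lra|]. intros x y h Hh.
  assert (P0 := G nil). assert (P1 := G (true :: nil)). assert (P2 := G (false :: nil)).
  destruct P0 as [_ P0], P1 as [_ P1], P2 as [_ P2]. simpl in P0, P1, P2.
  split; [|split; [|split]].
  - replace (2 * h * K) with (K * (x + h - (x - h))) by ring.
    apply (mvt_bound (fun t => F t y) (fun t => pdx F t y)); [lra| |].
    + intros t; apply Derive_correct; exact (proj1 (P0 t y)).
    + intros t; specialize (H1 t y); lra.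
  - replace (2 * h * K) with (K * (y + h - (y - h))) by ring.
    apply (mvt_bound (fun t => F x t) (fun t => pdy F x t)); [lra| |].
    + intros t; apply Derive_correct; exact (proj1 (proj2 (P0 x t))).
    + intros t; specialize (H2 x t); lra.
  - apply (second_diff (fun t => F t y) (fun t => pdx F t y) (fun t => pdx (pdx F) t y)); [exact Hh| | |].
    + intros t; apply Derive_correct; exact (proj1 (P0 t y)).
    + intros t; apply Derive_correct; exact (proj1 (P1 t y)).
    + intros t; specialize (H3 t y); lra.
  - apply (second_diff (fun t => F x t) (fun t => pdy F x t) (fun t => pdy (pdy F) x t)); [exact Hh| | |].
    + intros t; apply Derive_correct; exact (proj1 (proj2 (P0 x t))).
    + intros t; apply Derive_correct; exact (proj1 (proj2 (P2 x t))).
    + intros t; specialize (H4 x t); lra.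
Qed.
End Ana.

Lemma div_nonneg a b : 0 <= a -> 0 < b -> 0 <= a / b.
Proof. intros; unfold Rdiv; apply Rmult_le_pos; [assumption| left; apply Rinv_0_lt_compat; assumption]. Qed.

Lemma nonlin_pt p1 p2 q1 q2 :
  (p1 ^ 2 + p2 ^ 2 - 1) * (p1 * (p1 - q1) + p2 * (p2 - q2)) >=
  (p1 ^ 2 + p2 ^ 2 - 1) ^ 2 / 4 - (q1 ^ 2 + q2 ^ 2 - 1) ^ 2 / 4 - ((p1 - q1) ^ 2 + (p2 - q2) ^ 2) / 2.
Proof.
  set (P := p1 ^ 2 + p2 ^ 2). set (Q := q1 ^ 2 + q2 ^ 2). set (s := p1 * q1 + p2 * q2).
  assert (HP : 0 <= P) by (unfold P; pose proof (pow2_ge_0 p1); pose proof (pow2_ge_0 p2); lra).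
  assert (HQ : 0 <= Q) by (unfold Q; pose proof (pow2_ge_0 q1); pose proof (pow2_ge_0 q2); lra).
  assert (Hs : s ^ 2 <= P * Q).
  { assert (P * Q - s ^ 2 = (p1 * q2 - p2 * q1) ^ 2) by (unfold s, P, Q; ring).
    pose proof (pow2_ge_0 (p1 * q2 - p2 * q1)); lra. }
  match goal with |- ?A >= ?B => assert (E : A - B = (3 * P ^ 2 - 4 * P * s + Q ^ 2) / 4) by (unfold P, Q, s; field) end.
  clearbody P Q s.
  assert (K : 4 * P * s <= 3 * P ^ 2 + Q ^ 2).
  { destruct (Rle_or_lt s 0) as [Hs0|Hs0]; [nra|].
    assert (F : (4 * P * s) ^ 2 <= (3 * P ^ 2 + Q ^ 2) ^ 2).
    { assert ((4 * P * s) ^ 2 <= 16 * P ^ 3 * Q) by nra.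
      assert (16 * P ^ 3 * Q <= (3 * P ^ 2 + Q ^ 2) ^ 2).
      { assert ((3 * P ^ 2 + Q ^ 2) ^ 2 - 16 * P ^ 3 * Q = (Q - P) ^ 2 * (Q ^ 2 + 2 * P * Q + 9 * P ^ 2)) by ring.
        assert (0 <= (Q - P) ^ 2 * (Q ^ 2 + 2 * P * Q + 9 * P ^ 2)); [|lra].
        apply Rmult_le_pos; [apply pow2_ge_0|].
        pose proof (pow2_ge_0 Q); pose proof (pow2_ge_0 P); pose proof (Rmult_le_pos P Q HP HQ); lra. }
      lra. }
    assert (0 <= 4 * P * s) by nra. assert (0 <= 3 * P ^ 2 + Q ^ 2) by nra. nra. }
  lra.
Qed.

Lemma quad_pt a d w X : 0 < d -> 1 <= 8 * a * d -> 0 <= a * w ^ 2 + w * X / 2 + d * X ^ 2 / 2.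
Proof.
  intros Hd Ha.
  assert (E : 8 * d * (a * w ^ 2 + w * X / 2 + d * X ^ 2 / 2) = (2 * d * X + w) ^ 2 + (8 * a * d - 1) * w ^ 2) by field.
  assert (0 <= (2 * d * X + w) ^ 2 + (8 * a * d - 1) * w ^ 2).
  { assert (0 <= (8 * a * d - 1) * w ^ 2) by (apply Rmult_le_pos; [lra | apply pow2_ge_0]).
    pose proof (pow2_ge_0 (2 * d * X + w)); lra. }
  apply (Rmult_le_reg_l (8 * d)); lra.
Qed.

Lemma pow32_nonneg z : 0 <= pow32 z.
Proof.
  unfold pow32. destruct (Rle_or_lt 0 z).
  - apply Rmult_le_pos; [assumption| apply sqrt_pos].
  - rewrite sqrt_neg_0 by lra. lra.
Qed.

Lemma bdf_pt2 tau taup d s w w' X : 0 < tau -> 0 < taup -> 0 < d -> 0 <= s ->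
  tau < 4 * d * R_L (tau / taup) s ->
  ((1 + 2 * (tau / taup)) / (tau * (1 + tau / taup)) * w - (tau / taup) ^ 2 / (tau * (1 + tau / taup)) * w') * w
  + d / 2 * X ^ 2 + 1 / 2 * w * X >=
  pow32 s / (2 * (1 + s)) / tau * w ^ 2 - pow32 (tau / taup) / (2 * (1 + tau / taup)) / taup * w' ^ 2.
Proof.
  intros Ht Htp Hd Hs HR.
  set (r := tau / taup) in *.
  assert (Hr : 0 < r) by (unfold r; apply Rdiv_lt_0_compat; assumption).
  assert (Hrt : taup = tau / r) by (unfold r; field; lra).
  set (q := sqrt r). assert (Hq : q * q = r) by (apply sqrt_sqrt; lra).
  assert (Hq0 : 0 <= q) by apply sqrt_pos.
  set (cs := pow32 s / (1 + s)).
  assert (Hcs : 0 <= cs) by (unfold cs; apply div_nonneg; [apply pow32_nonneg| lra]).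
  assert (Hp : pow32 r = r * q) by reflexivity.
  unfold R_L in HR. fold cs in HR. rewrite Hp in HR |- *.
  replace (pow32 s / (2 * (1 + s)) / tau) with (cs / (2 * tau)) by (unfold cs; field; split; lra).
  rewrite Hrt.
  assert (Y : r ^ 2 * w * w' <= (r * q * w ^ 2 + r ^ 2 * q * w' ^ 2) / 2).
  { assert (0 <= r * q * (w - q * w') ^ 2) by (apply Rmult_le_pos; [apply Rmult_le_pos; lra| apply pow2_ge_0]).
    replace (r ^ 2) with (r * (q * q)) by (rewrite Hq; ring).
    replace (r * (q * q) * q) with (r * q * (q * q)) by ring. nra. }
  set (a := ((2 + 4 * r - r * q) / (1 + r) - cs) / (2 * tau)).
  assert (Ha : 1 <= 8 * a * d).
  { unfold a. apply (Rmult_le_reg_r tau); [lra|].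
    replace (8 * (((2 + 4 * r - r * q) / (1 + r) - cs) / (2 * tau)) * d * tau) with
      (4 * d * ((2 + 4 * r - r * q) / (1 + r) - cs)) by (field; lra). lra. }
  pose proof (quad_pt a d w X Hd Ha).
  assert (E : ((1 + 2 * r) / (tau * (1 + r)) * w - r ^ 2 / (tau * (1 + r)) * w') * w
     + d / 2 * X ^ 2 + 1 / 2 * w * X - (cs / (2 * tau) * w ^ 2 - r * q / (2 * (1 + r)) / (tau / r) * w' ^ 2)
     = (a * w ^ 2 + w * X / 2 + d * X ^ 2 / 2)
       + ((r * q * w ^ 2 + r ^ 2 * q * w' ^ 2) / 2 - r ^ 2 * w * w') / (tau * (1 + r))).
  { unfold a. field. lra. }
  assert (0 <= ((r * q * w ^ 2 + r ^ 2 * q * w' ^ 2) / 2 - r ^ 2 * w * w') / (tau * (1 + r))).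
  { apply div_nonneg; [lra| apply Rmult_lt_0_compat; lra]. }
  lra.
Qed.

Lemma bdf_pt1 tau d s w X : 0 < tau -> 0 < d -> 0 <= s ->
  tau < 4 * d * R_L 0 s ->
  2 / tau * w * w + d / 2 * X ^ 2 + 1 / 2 * w * X >= pow32 s / (2 * (1 + s)) / tau * w ^ 2.
Proof.
  intros Ht Hd Hs HR.
  set (cs := pow32 s / (1 + s)).
  assert (Hcs : 0 <= cs) by (unfold cs; apply div_nonneg; [apply pow32_nonneg| lra]).
  unfold R_L in HR. fold cs in HR.
  replace (pow32 0) with 0 in HR by (unfold pow32; ring).
  replace ((2 + 4 * 0 - 0) / (1 + 0)) with 2 in HR by field.
  replace (pow32 s / (2 * (1 + s)) / tau) with (cs / (2 * tau)) by (unfold cs; field; split; lra).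
  set (a := (4 - cs) / (2 * tau)).
  assert (Ha : 1 <= 8 * a * d).
  { unfold a. apply (Rmult_le_reg_r tau); [lra|].
    replace (8 * ((4 - cs) / (2 * tau)) * d * tau) with (4 * d * (4 - cs)) by (field; lra). nra. }
  pose proof (quad_pt a d w X Hd Ha).
  assert (E : 2 / tau * w * w + d / 2 * X ^ 2 + 1 / 2 * w * X - cs / (2 * tau) * w ^ 2 =
    a * w ^ 2 + w * X / 2 + d * X ^ 2 / 2) by (unfold a; field; lra).
  lra.
Qed.
Section Disc.
Variable M : nat.
Variable h : R.
Hypothesis HM : (1 <= M)%nat.

Definition perX (v : grid) := forall i j, v (i + Z.of_nat M)%Z j = v i j.
Definition perY (v : grid) := forall i j, v i (j + Z.of_nat M)%Z = v i j.

Lemma gsum_ext F G : (forall i j, F i j = G i j) -> gsum M h F = gsum M h G.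
Proof.
  intros E; unfold gsum; f_equal. apply sum_eq; intros a _; apply sum_eq; intros b _; apply E.
Qed.

Lemma gsum_plus F G : gsum M h F + gsum M h G = gsum M h (fun i j => F i j + G i j).
Proof.
  unfold gsum. rewrite <- Rmult_plus_distr_l, <- plus_sum. f_equal.
  apply sum_eq; intros a _. rewrite <- plus_sum. reflexivity.
Qed.

Lemma gsum_scal c F : c * gsum M h F = gsum M h (fun i j => c * F i j).
Proof.
  unfold gsum. rewrite <- Rmult_assoc, (Rmult_comm c), Rmult_assoc. f_equal.
  rewrite scal_sum. apply sum_eq; intros a _. rewrite Rmult_comm, scal_sum. apply sum_eq; intros; ring.
Qed.

Lemma gsum_le F G : (forall i j, F i j <= G i j) -> gsum M h F <= gsum M h G.
Proof.
  intros E; unfold gsum. apply Rmult_le_compat_l; [apply pow2_ge_0|].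
  apply sum_Rle; intros a _; apply sum_Rle; intros b _; apply E.
Qed.

Lemma gsum_const c : gsum M h (fun _ _ => c) = h ^ 2 * INR M * INR M * c.
Proof.
  unfold gsum. rewrite !sum_cte. replace (S (M - 1)) with M by lia. ring.
Qed.

Lemma gsum_nonneg F : (forall i j, 0 <= F i j) -> 0 <= gsum M h F.
Proof.
  intros E. replace 0 with (gsum M h (fun _ _ => 0)) by (rewrite gsum_const; ring).
  apply gsum_le; exact E.
Qed.

Lemma tele1 (F : Z -> R) n :
  sum_f_R0 (fun a => F (Z.of_nat a + 1 + 1)%Z - F (Z.of_nat a + 1)%Z) n = F (Z.of_nat n + 1 + 1)%Z - F 1%Z.
Proof.
  induction n as [|n IH]; [simpl; reflexivity|].
  rewrite tech5, IH, Nat2Z.inj_succ. unfold Z.succ. ring.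
Qed.

Lemma tele1_per (F : Z -> R) : (forall i, F (i + Z.of_nat M)%Z = F i) ->
  sum_f_R0 (fun a => F (Z.of_nat a + 1 + 1)%Z - F (Z.of_nat a + 1)%Z) (M - 1) = 0.
Proof.
  intros P. rewrite tele1. replace (Z.of_nat (M - 1) + 1 + 1)%Z with (1 + Z.of_nat M)%Z by lia.
  rewrite P; ring.
Qed.

Lemma gsum_telex k T : perX T -> gsum M h (fun i j => k * (T (i + 1)%Z j - T i j)) = 0.
Proof.
  intros P. rewrite <- gsum_scal. unfold gsum.
  set (S := fun i => sum_f_R0 (fun b => T i (Z.of_nat b + 1)%Z) (M - 1)).
  replace (sum_f_R0 _ (M - 1)) with (sum_f_R0 (fun a => S (Z.of_nat a + 1 + 1)%Z - S (Z.of_nat a + 1)%Z) (M - 1)).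
  - rewrite tele1_per; [ring|]. intros i; unfold S; apply sum_eq; intros; apply P.
  - apply sum_eq; intros a _. unfold S. rewrite <- minus_sum. reflexivity.
Qed.

Lemma gsum_teley k T : perY T -> gsum M h (fun i j => k * (T i (j + 1)%Z - T i j)) = 0.
Proof.
  intros P. rewrite <- gsum_scal. unfold gsum.
  replace (sum_f_R0 _ (M - 1)) with (sum_f_R0 (fun _ => 0) (M - 1)).
  - rewrite sum_cte; ring.
  - apply sum_eq; intros a _. rewrite tele1_per; [reflexivity|]. intros; apply P.
Qed.


Lemma gsum_minus F G : gsum M h F - gsum M h G = gsum M h (fun i j => F i j - G i j).
Proof.
  unfold Rminus. replace (- gsum M h G) with ((-1) * gsum M h G) by ring.
  rewrite gsum_scal, gsum_plus. apply gsum_ext; intros; ring.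
Qed.

Lemma gsum_eq_telex A B k T : perX T -> (forall i j, A i j - B i j = k * (T (i + 1)%Z j - T i j)) ->
  gsum M h A = gsum M h B.
Proof.
  intros P E. apply Rminus_diag_uniq. rewrite gsum_minus, <- (gsum_telex k T P).
  apply gsum_ext; exact E.
Qed.

Lemma gsum_eq_teley A B k T : perY T -> (forall i j, A i j - B i j = k * (T i (j + 1)%Z - T i j)) ->
  gsum M h A = gsum M h B.
Proof.
  intros P E. apply Rminus_diag_uniq. rewrite gsum_minus, <- (gsum_teley k T P).
  apply gsum_ext; exact E.
Qed.

Lemma perX_add v : perX v -> forall i a j, v (i + Z.of_nat M + a)%Z j = v (i + a)%Z j.
Proof. intros P i a j. replace (i + Z.of_nat M + a)%Z with (i + a + Z.of_nat M)%Z by ring. apply P. Qed.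
Lemma perX_sub v : perX v -> forall i a j, v (i + Z.of_nat M - a)%Z j = v (i - a)%Z j.
Proof. intros P i a j. replace (i + Z.of_nat M - a)%Z with (i - a + Z.of_nat M)%Z by ring. apply P. Qed.
Lemma perY_add v : perY v -> forall i a j, v i (j + Z.of_nat M + a)%Z = v i (j + a)%Z.
Proof. intros P i a j. replace (j + Z.of_nat M + a)%Z with (j + a + Z.of_nat M)%Z by ring. apply P. Qed.
Lemma perY_sub v : perY v -> forall i a j, v i (j + Z.of_nat M - a)%Z = v i (j - a)%Z.
Proof. intros P i a j. replace (j + Z.of_nat M - a)%Z with (j - a + Z.of_nat M)%Z by ring. apply P. Qed.

Ltac perx H := repeat first [rewrite Z.sub_add | rewrite (perX_add _ H) | rewrite (perX_sub _ H) | rewrite H].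
Ltac pery H := repeat first [rewrite Z.sub_add | rewrite (perY_add _ H) | rewrite (perY_sub _ H) | rewrite H].

Lemma gper_X v : gperiodic M v -> perX v.
Proof. intros P i j; apply P. Qed.
Lemma gper_Y v : gperiodic M v -> perY v.
Proof. intros P i j; apply P. Qed.
Lemma gper_XY v : perX v -> perY v -> gperiodic M v.
Proof. intros P Q i j; split; [apply P|apply Q]. Qed.

Lemma perX_op2 (f : R -> R -> R) v w : perX v -> perX w -> perX (fun i j => f (v i j) (w i j)).
Proof. intros P Q i j; rewrite P, Q; reflexivity. Qed.
Lemma perY_op2 (f : R -> R -> R) v w : perY v -> perY w -> perY (fun i j => f (v i j) (w i j)).
Proof. intros P Q i j; rewrite P, Q; reflexivity. Qed.

Lemma gper_op2 (f : R -> R -> R) v w : gperiodic M v -> gperiodic M w ->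
  gperiodic M (fun i j => f (v i j) (w i j)).
Proof.
  intros P Q. apply gper_XY; [apply perX_op2| apply perY_op2]; first [apply gper_X | apply gper_Y]; assumption.
Qed.

Lemma gper_Dcx v : gperiodic M v -> gperiodic M (Dcx h v).
Proof.
  intros P; pose proof (gper_X v P) as PX; pose proof (gper_Y v P) as PY.
  apply gper_XY; intros i j; unfold Dcx; [perx PX | pery PY]; reflexivity.
Qed.
Lemma gper_Dcy v : gperiodic M v -> gperiodic M (Dcy h v).
Proof.
  intros P; pose proof (gper_X v P) as PX; pose proof (gper_Y v P) as PY.
  apply gper_XY; intros i j; unfold Dcy; [perx PX | pery PY]; reflexivity.
Qed.
Lemma gper_Lap v : gperiodic M v -> gperiodic M (Lap_h h v).
Proof.
  intros P; pose proof (gper_X v P) as PX; pose proof (gper_Y v P) as PY.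
  apply gper_XY; intros i j; unfold Lap_h, d2x, d2y; [perx PX | pery PY]; reflexivity.
Qed.

Hypothesis Hh : h <> 0.

Lemma sbp_d2x g v : perX g -> perX v ->
  gsum M h (fun i j => d2x h g i j * v i j) = gsum M h (fun i j => g i j * d2x h v i j).
Proof.
  intros Pg Pv. apply (gsum_eq_telex _ _ (/ h ^ 2) (fun i j => g i j * v (i - 1)%Z j - g (i - 1)%Z j * v i j)).
  - intros i j; simpl; perx Pg; perx Pv; reflexivity.
  - intros i j; simpl. rewrite !Z.add_simpl_r. unfold d2x. field; exact Hh.
Qed.

Lemma sbp_d2y g v : perY g -> perY v ->
  gsum M h (fun i j => d2y h g i j * v i j) = gsum M h (fun i j => g i j * d2y h v i j).
Proof.
  intros Pg Pv. apply (gsum_eq_teley _ _ (/ h ^ 2) (fun i j => g i j * v i (j - 1)%Z - g i (j - 1)%Z * v i j)).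
  - intros i j; simpl; pery Pg; pery Pv; reflexivity.
  - intros i j; simpl. rewrite !Z.add_simpl_r. unfold d2y. field; exact Hh.
Qed.

Lemma sbp_Lap g v : gperiodic M g -> gperiodic M v ->
  gsum M h (fun i j => Lap_h h g i j * v i j) = gsum M h (fun i j => g i j * Lap_h h v i j).
Proof.
  intros Pg Pv. unfold Lap_h.
  rewrite (gsum_ext _ (fun i j => d2x h g i j * v i j + d2y h g i j * v i j)) by (intros; ring).
  rewrite <- gsum_plus, sbp_d2x, sbp_d2y, gsum_plus by (first [apply gper_X|apply gper_Y]; assumption).
  apply gsum_ext; intros; ring.
Qed.

Lemma sbp_Dcx g v : perX g -> perX v ->
  gsum M h (fun i j => Dcx h g i j * v i j) = gsum M h (fun i j => - (g i j * Dcx h v i j)).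
Proof.
  intros Pg Pv. apply (gsum_eq_telex _ _ (/ (2 * h)) (fun i j => g i j * v (i - 1)%Z j + g (i - 1)%Z j * v i j)).
  - intros i j; simpl; perx Pg; perx Pv; reflexivity.
  - intros i j; simpl. rewrite !Z.add_simpl_r. unfold Dcx. field; exact Hh.
Qed.

Lemma sbp_Dcy g v : perY g -> perY v ->
  gsum M h (fun i j => Dcy h g i j * v i j) = gsum M h (fun i j => - (g i j * Dcy h v i j)).
Proof.
  intros Pg Pv. apply (gsum_eq_teley _ _ (/ (2 * h)) (fun i j => g i j * v i (j - 1)%Z + g i (j - 1)%Z * v i j)).
  - intros i j; simpl; pery Pg; pery Pv; reflexivity.
  - intros i j; simpl. rewrite !Z.add_simpl_r. unfold Dcy. field; exact Hh.
Qed.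


Definition dxp (v : grid) : grid := fun i j => (v (i + 1)%Z j - v i j) / h.
Definition dyp (v : grid) : grid := fun i j => (v i (j + 1)%Z - v i j) / h.

Lemma grad_le v : gperiodic M v ->
  gsum M h (fun i j => Dcx h v i j ^ 2 + Dcy h v i j ^ 2) <= - gsum M h (fun i j => v i j * Lap_h h v i j).
Proof.
  intros P; pose proof (gper_X v P) as PX; pose proof (gper_Y v P) as PY.
  assert (E1 : gsum M h (fun i j => dxp v i j ^ 2) = gsum M h (fun i j => dxp v (i - 1)%Z j ^ 2)).
  { apply (gsum_eq_telex _ _ 1 (fun i j => dxp v (i - 1)%Z j ^ 2)).
    - intros i j; unfold dxp; simpl; perx PX; reflexivity.
    - intros i j; simpl. rewrite !Z.add_simpl_r. ring. }
  assert (E2 : gsum M h (fun i j => dyp v i j ^ 2) = gsum M h (fun i j => dyp v i (j - 1)%Z ^ 2)).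
  { apply (gsum_eq_teley _ _ 1 (fun i j => dyp v i (j - 1)%Z ^ 2)).
    - intros i j; unfold dyp; simpl; pery PY; reflexivity.
    - intros i j; simpl. rewrite !Z.add_simpl_r. ring. }
  assert (E3 : gsum M h (fun i j => v i j * d2x h v i j) = gsum M h (fun i j => - dxp v i j ^ 2)).
  { apply (gsum_eq_telex _ _ (/ h) (fun i j => v i j * dxp v (i - 1)%Z j)).
    - intros i j; unfold dxp; simpl; perx PX; reflexivity.
    - intros i j; simpl. rewrite !Z.add_simpl_r. unfold d2x, dxp. rewrite !Z.sub_add. field; exact Hh. }
  assert (E4 : gsum M h (fun i j => v i j * d2y h v i j) = gsum M h (fun i j => - dyp v i j ^ 2)).
  { apply (gsum_eq_teley _ _ (/ h) (fun i j => v i j * dyp v i (j - 1)%Z)).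
    - intros i j; unfold dyp; simpl; pery PY; reflexivity.
    - intros i j; simpl. rewrite !Z.add_simpl_r. unfold d2y, dyp. rewrite !Z.sub_add. field; exact Hh. }
  replace (- gsum M h (fun i j => v i j * Lap_h h v i j)) with
    ((gsum M h (fun i j => dxp v i j ^ 2) + gsum M h (fun i j => dxp v (i - 1)%Z j ^ 2)) / 2 +
     (gsum M h (fun i j => dyp v i j ^ 2) + gsum M h (fun i j => dyp v i (j - 1)%Z ^ 2)) / 2).
  2:{ rewrite <- E1, <- E2. unfold Lap_h.
      rewrite (gsum_ext (fun i j => v i j * (d2x h v i j + d2y h v i j)) (fun i j => v i j * d2x h v i j + v i j * d2y h v i j)) by (intros; ring).
      rewrite <- gsum_plus, E3, E4.
      replace (gsum M h (fun i j => - dxp v i j ^ 2)) with ((-1) * gsum M h (fun i j => dxp v i j ^ 2)).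
      2:{ rewrite gsum_scal; apply gsum_ext; intros; ring. }
      replace (gsum M h (fun i j => - dyp v i j ^ 2)) with ((-1) * gsum M h (fun i j => dyp v i j ^ 2)).
      2:{ rewrite gsum_scal; apply gsum_ext; intros; ring. }
      field. }
  rewrite !gsum_plus. unfold Rdiv. rewrite !(Rmult_comm _ (/ 2)), !gsum_scal, gsum_plus.
  apply gsum_le; intros i j.
  assert (Ex : Dcx h v i j = (dxp v i j + dxp v (i - 1)%Z j) / 2).
  { unfold Dcx, dxp. rewrite Z.sub_add. field; exact Hh. }
  assert (Ey : Dcy h v i j = (dyp v i j + dyp v i (j - 1)%Z) / 2).
  { unfold Dcy, dyp. rewrite Z.sub_add. field; exact Hh. }
  rewrite Ex, Ey. set (a := dxp v i j). set (b := dxp v (i - 1)%Z j).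
  set (c := dyp v i j). set (d := dyp v i (j - 1)%Z).
  pose proof (pow2_ge_0 (a - b)); pose proof (pow2_ge_0 (c - d)). clearbody a b c d. clear Ex Ey. nra.
Qed.

Variable d : R.
Hypothesis Hd : 0 < d.

Definition Ep (v : grid) : grid := fun i j =>
  d / 2 * Lap_h h v i j ^ 2 + (Dcx h v i j ^ 2 + Dcy h v i j ^ 2 - 1) ^ 2 / 4.
Definition En (v : grid) := gsum M h (Ep v).

Lemma gsum_zero : gsum M h (fun _ _ => 0) = 0.
Proof. rewrite gsum_const; ring. Qed.

Lemma energy_step (u u' Dt : grid) : gperiodic M u -> gperiodic M u' ->
  (forall i j, Dt i j + d * Lap_h h (Lap_h h u) i j - divf_h h u i j = 0) ->
  En u - En u' + gsum M h (fun i j => Dt i j * (u i j - u' i j)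
     + d / 2 * Lap_h h (fun a b => u a b - u' a b) i j ^ 2
     + 1 / 2 * (u i j - u' i j) * Lap_h h (fun a b => u a b - u' a b) i j) <= 0.
Proof.
  intros Pu Pu' Eq.
  set (w := fun a b => u a b - u' a b).
  assert (Pw : gperiodic M w) by (apply (gper_op2 (fun x y => x - y)); assumption).
  set (g1 := fun i j => (Dcx h u i j ^ 2 + Dcy h u i j ^ 2 - 1) * Dcx h u i j).
  set (g2 := fun i j => (Dcx h u i j ^ 2 + Dcy h u i j ^ 2 - 1) * Dcy h u i j).
  assert (Pg1 : gperiodic M g1).
  { apply (gper_op2 (fun x y => (x ^ 2 + y ^ 2 - 1) * x)); apply gper_Dcx || apply gper_Dcy; assumption. }
  assert (Pg2 : gperiodic M g2).
  { apply (gper_op2 (fun x y => (x ^ 2 + y ^ 2 - 1) * y)); apply gper_Dcx || apply gper_Dcy; assumption. }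
  assert (Hdiv : forall i j, divf_h h u i j = Dcx h g1 i j + Dcy h g2 i j) by reflexivity.
  assert (E0 : gsum M h (fun i j => Dt i j * w i j) + d * gsum M h (fun i j => Lap_h h (Lap_h h u) i j * w i j)
               - gsum M h (fun i j => divf_h h u i j * w i j) = 0).
  { rewrite gsum_scal, gsum_plus, gsum_minus, <- gsum_zero. apply gsum_ext; intros i j.
    transitivity ((Dt i j + d * Lap_h h (Lap_h h u) i j - divf_h h u i j) * w i j); [ring|].
    rewrite Eq; ring. }
  assert (E1 : gsum M h (fun i j => Lap_h h (Lap_h h u) i j * w i j) = gsum M h (fun i j => Lap_h h u i j * Lap_h h w i j)).
  { apply sbp_Lap; auto. apply gper_Lap; auto. }
  assert (E2 : gsum M h (fun i j => divf_h h u i j * w i j) =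
     - gsum M h (fun i j => g1 i j * Dcx h w i j + g2 i j * Dcy h w i j)).
  { rewrite (gsum_ext _ (fun i j => Dcx h g1 i j * w i j + Dcy h g2 i j * w i j)) by (intros; rewrite Hdiv; ring).
    rewrite <- gsum_plus, sbp_Dcx, sbp_Dcy; try (apply gper_X || apply gper_Y; assumption); try assumption.
    rewrite gsum_plus. replace (- gsum M h (fun i j => g1 i j * Dcx h w i j + g2 i j * Dcy h w i j))
      with ((-1) * gsum M h (fun i j => g1 i j * Dcx h w i j + g2 i j * Dcy h w i j)) by ring.
    rewrite gsum_scal; apply gsum_ext; intros; ring. }
  assert (E3 : gsum M h (fun i j => Ep u i j - Ep u' i j + d / 2 * Lap_h h w i j ^ 2
                  - (Dcx h w i j ^ 2 + Dcy h w i j ^ 2) / 2)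
             <= gsum M h (fun i j => d * (Lap_h h u i j * Lap_h h w i j) + (g1 i j * Dcx h w i j + g2 i j * Dcy h w i j))).
  { apply gsum_le; intros i j.
    assert (HL : Lap_h h w i j = Lap_h h u i j - Lap_h h u' i j) by (unfold Lap_h, d2x, d2y, w; field; exact Hh).
    assert (HX : Dcx h w i j = Dcx h u i j - Dcx h u' i j) by (unfold Dcx, w; field; exact Hh).
    assert (HY : Dcy h w i j = Dcy h u i j - Dcy h u' i j) by (unfold Dcy, w; field; exact Hh).
    unfold Ep, g1, g2. rewrite HL, HX, HY.
    pose proof (nonlin_pt (Dcx h u i j) (Dcy h u i j) (Dcx h u' i j) (Dcy h u' i j)).
    set (a := Lap_h h u i j). set (b := Lap_h h u' i j).
    assert (d * (a * (a - b)) = d / 2 * a ^ 2 - d / 2 * b ^ 2 + d / 2 * (a - b) ^ 2) by field.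
    lra. }
  assert (E4 := grad_le w Pw).
  assert (E5 : gsum M h (fun i j => Ep u i j - Ep u' i j + d / 2 * Lap_h h w i j ^ 2
                  - (Dcx h w i j ^ 2 + Dcy h w i j ^ 2) / 2) =
          En u - En u' + d / 2 * gsum M h (fun i j => Lap_h h w i j ^ 2)
          - / 2 * gsum M h (fun i j => Dcx h w i j ^ 2 + Dcy h w i j ^ 2)).
  { unfold En. rewrite !gsum_scal, !gsum_minus, gsum_plus, gsum_minus. apply gsum_ext; intros; field. }
  assert (E6 : gsum M h (fun i j => d * (Lap_h h u i j * Lap_h h w i j) + (g1 i j * Dcx h w i j + g2 i j * Dcy h w i j)) =
     d * gsum M h (fun i j => Lap_h h u i j * Lap_h h w i j) + gsum M h (fun i j => g1 i j * Dcx h w i j + g2 i j * Dcy h w i j)).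
  { rewrite gsum_scal, gsum_plus; reflexivity. }
  assert (E7 : gsum M h (fun i j => Dt i j * w i j + d / 2 * Lap_h h w i j ^ 2 + 1 / 2 * w i j * Lap_h h w i j) =
     gsum M h (fun i j => Dt i j * w i j) + d / 2 * gsum M h (fun i j => Lap_h h w i j ^ 2)
     + / 2 * gsum M h (fun i j => w i j * Lap_h h w i j)).
  { rewrite !gsum_scal, !gsum_plus. apply gsum_ext; intros; field. }
  unfold w in *; cbv beta in *. rewrite E7. rewrite E1, E2 in E0. lra.
Qed.

End Disc.

Definition DiffB (F : R -> R -> R) (K : R) := forall x y h, 0 < h ->
  Rabs (F (x + h) y - F (x - h) y) <= 2 * h * K /\
  Rabs (F x (y + h) - F x (y - h)) <= 2 * h * K /\
  Rabs (F (x + h) y - 2 * F x y + F (x - h) y) <= 2 * h ^ 2 * K /\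
  Rabs (F x (y + h) - 2 * F x y + F x (y - h)) <= 2 * h ^ 2 * K.

Lemma sample_bounds F0 F1 K0 K1 c h (v : grid) : 0 < h -> 0 <= K1 -> 0 <= c ->
  DiffB F0 K0 -> DiffB F1 K1 ->
  (forall i j, v i j = F0 (IZR i * h) (IZR j * h) - c * F1 (IZR i * h) (IZR j * h)) ->
  forall i j, Rabs (Dcx h v i j) <= K0 + c * K1 /\ Rabs (Dcy h v i j) <= K0 + c * K1 /\
              Rabs (Lap_h h v i j) <= 4 * (K0 + c * K1).
Proof.
  intros Hh HK1 Hc D0 D1 Hv i j.
  set (x := IZR i * h). set (y := IZR j * h).
  assert (Ex1 : IZR (i + 1) * h = x + h) by (unfold x; rewrite plus_IZR; simpl; ring).
  assert (Ex2 : IZR (i - 1) * h = x - h) by (unfold x; rewrite minus_IZR; simpl; ring).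
  assert (Ey1 : IZR (j + 1) * h = y + h) by (unfold y; rewrite plus_IZR; simpl; ring).
  assert (Ey2 : IZR (j - 1) * h = y - h) by (unfold y; rewrite minus_IZR; simpl; ring).
  destruct (D0 x y h Hh) as (a1 & a2 & a3 & a4).
  destruct (D1 x y h Hh) as (b1 & b2 & b3 & b4).
  assert (T : forall p q, Rabs p <= 2 * h * K0 -> Rabs q <= 2 * h * K1 -> Rabs ((p - c * q) / (2 * h)) <= K0 + c * K1).
  { intros p q Hp Hq. unfold Rdiv. rewrite Rabs_mult, Rabs_inv, (Rabs_right (2 * h)) by lra.
    apply (Rmult_le_reg_r (2 * h)); [lra|]. rewrite Rmult_assoc, Rinv_l, Rmult_1_r by lra.
    eapply Rle_trans; [apply Rabs_triang|]. rewrite Rabs_Ropp, Rabs_mult, (Rabs_right c) by lra.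
    assert (c * Rabs q <= c * (2 * h * K1)) by (apply Rmult_le_compat_l; lra). nra. }
  assert (T2 : forall p q, Rabs p <= 2 * h ^ 2 * K0 -> Rabs q <= 2 * h ^ 2 * K1 -> Rabs ((p - c * q) / h ^ 2) <= 2 * (K0 + c * K1)).
  { intros p q Hp Hq. assert (Hh2 : 0 < h ^ 2) by (apply pow_lt; lra). unfold Rdiv. rewrite Rabs_mult, Rabs_inv, (Rabs_right (h ^ 2)) by lra.
    apply (Rmult_le_reg_r (h ^ 2)); [lra|]. rewrite Rmult_assoc, Rinv_l, Rmult_1_r by lra.
    eapply Rle_trans; [apply Rabs_triang|]. rewrite Rabs_Ropp, Rabs_mult, (Rabs_right c) by lra.
    assert (c * Rabs q <= c * (2 * h ^ 2 * K1)) by (apply Rmult_le_compat_l; lra). nra. }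
  split; [|split].
  - unfold Dcx. rewrite !Hv. fold x y. rewrite Ex1, Ex2.
    replace ((F0 (x + h) y - c * F1 (x + h) y - (F0 (x - h) y - c * F1 (x - h) y)) / (2 * h)) with
      (((F0 (x + h) y - F0 (x - h) y) - c * (F1 (x + h) y - F1 (x - h) y)) / (2 * h)) by (field; lra).
    apply T; assumption.
  - unfold Dcy. rewrite !Hv. fold x y. rewrite Ey1, Ey2.
    replace ((F0 x (y + h) - c * F1 x (y + h) - (F0 x (y - h) - c * F1 x (y - h))) / (2 * h)) with
      (((F0 x (y + h) - F0 x (y - h)) - c * (F1 x (y + h) - F1 x (y - h))) / (2 * h)) by (field; lra).
    apply T; assumption.
  - unfold Lap_h, d2x, d2y. rewrite !Hv. fold x y. rewrite Ex1, Ex2, Ey1, Ey2.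
    match goal with |- Rabs (?A + ?B) <= _ =>
      replace A with (((F0 (x + h) y - 2 * F0 x y + F0 (x - h) y) - c * (F1 (x + h) y - 2 * F1 x y + F1 (x - h) y)) / h ^ 2) by (field; lra);
      replace B with (((F0 x (y + h) - 2 * F0 x y + F0 x (y - h)) - c * (F1 x (y + h) - 2 * F1 x y + F1 x (y - h))) / h ^ 2) by (field; lra) end.
    eapply Rle_trans; [apply Rabs_triang|].
    pose proof (T2 _ _ a3 b3). pose proof (T2 _ _ a4 b4). lra.
Qed.

Lemma ratio_nonneg tau N rN1 k : (forall n, (1 <= n <= N)%nat -> 0 < tau n) -> 0 < rN1 ->
  (k <= S N)%nat -> 0 <= ratio tau N rN1 k.
Proof.
  intros Ht Hr Hk. unfold ratio.
  destruct (Nat.leb k 1) eqn:E1; [lra|]. destruct (Nat.eqb k (S N)) eqn:E2; [lra|].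
  apply Nat.leb_gt in E1. apply Nat.eqb_neq in E2.
  left; apply Rdiv_lt_0_compat; apply Ht; lia.
Qed.

Lemma ratio_mid tau N rN1 k : (2 <= k <= N)%nat -> ratio tau N rN1 k = tau k / tau (k - 1)%nat.
Proof.
  intros Hk. unfold ratio.
  destruct (Nat.leb k 1) eqn:E1; [apply Nat.leb_le in E1; lia|].
  destruct (Nat.eqb k (S N)) eqn:E2; [apply Nat.eqb_eq in E2; lia|]. reflexivity.
Qed.

Lemma ratio_1 tau N rN1 : ratio tau N rN1 1 = 0.
Proof. reflexivity. Qed.

Lemma sqrt_mono a b : a <= b -> sqrt a <= sqrt b.
Proof. apply sqrt_le_1_alt. Qed.

Theorem lemma2p3 :
  forall (L delta rs : R) (phi0 : R -> R -> R),
    0 < L -> 0 < delta -> 0 < rs -> rs < 4.864 ->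
    smooth2 phi0 -> periodic2 L phi0 ->
    exists C0 : R,
      forall (M N : nat) (tau : nat -> R) (rN1 : R) (u : nat -> grid),
        (1 <= M)%nat ->
        let h := L / INR M in
        (forall n, (1 <= n <= N)%nat -> 0 < tau n) ->
        0 < rN1 -> rN1 <= rs ->
        (forall k, (2 <= k <= N)%nat -> ratio tau N rN1 k <= rs) ->
        (forall n, (1 <= n <= N)%nat ->
           tau n < 4 * delta *
             Rmin (R_L (ratio tau N rN1 n) (ratio tau N rN1 (S n)))
                  ((2 + ratio tau N rN1 2) / (1 + ratio tau N rN1 2))) ->
        (forall n, (n <= N)%nat -> gperiodic M (u n)) ->
        (forall i j : Z,
           u 0%nat i j = phi0 (IZR i * h) (IZR j * h)
                         - tau 1%nat / 2 * phi1 delta phi0 (IZR i * h) (IZR j * h)) ->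
        (forall n, (1 <= n <= N)%nat -> forall i j : Z,
           D2 tau u n i j + delta * Lap_h h (Lap_h h (u n)) i j
           - divf_h h (u n) i j = 0) ->
        forall n, (1 <= n <= N)%nat ->
          Rmax (norm_grad M h (u n)) (Rmax (norm4_grad M h (u n)) (norm_lap M h (u n)))
          <= C0.
Proof.
  intros L delta rs phi0 HL Hd Hrs Hrs2 Hsm Hper.
  assert (G0 : Good L phi0) by (apply Good_smooth; assumption).
  assert (G1 : Good L (phi1 delta phi0)) by (apply Good_phi1; assumption).
  destruct (Good_diffs L HL phi0 G0) as [K0 [HK0 D0]].
  destruct (Good_diffs L HL _ G1) as [K1 [HK1 D1]].
  set (B := K0 + 4 * delta * K1).
  assert (HB : 0 <= B) by (unfold B; assert (0 <= delta * K1) by (apply Rmult_le_pos; lra); lra).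
  set (e0 := delta / 2 * (4 * B) ^ 2 + (2 * B ^ 2 + 1) ^ 2 / 4).
  set (E0B := L ^ 2 * e0).
  assert (He0 : 0 <= e0) by (unfold e0; assert (0 <= (4 * B) ^ 2) by apply pow2_ge_0;
     assert (0 <= (2 * B ^ 2 + 1) ^ 2) by apply pow2_ge_0; assert (0 <= delta / 2 * (4 * B) ^ 2) by (apply Rmult_le_pos; lra); lra).
  assert (HE0B : 0 <= E0B) by (unfold E0B; apply Rmult_le_pos; [apply pow2_ge_0| exact He0]).
  exists (sqrt (2 * E0B / delta) + sqrt (sqrt (8 * E0B + 2 * L ^ 2)) + sqrt ((8 * E0B + 3 * L ^ 2) / 2)).
  intros M N tau rN1 u HM h Htau HrN1 HrN1s Hrat Hstep Hpu Hu0 Heq n Hn.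
  assert (HMr : 0 < INR M) by (apply lt_0_INR; lia).
  assert (Hh : 0 < h) by (unfold h; apply Rdiv_lt_0_compat; assumption).
  assert (Hh0 : h <> 0) by lra.
  assert (HhM : h ^ 2 * INR M * INR M = L ^ 2) by (unfold h; field; lra).
  set (r := ratio tau N rN1).
  assert (Hr0 : forall k, (k <= S N)%nat -> 0 <= r k) by (intros; apply ratio_nonneg; assumption).
  assert (HN : (1 <= N)%nat) by lia.
  assert (Ht1 : 0 < tau 1%nat) by (apply Htau; lia).
  assert (Ht1b : tau 1%nat <= 8 * delta).
  { specialize (Hstep 1%nat ltac:(lia)). fold r in Hstep.
    assert (Hr2 : 0 <= r 2%nat) by (apply Hr0; lia).
    assert (Rmin (R_L (r 1%nat) (r 2%nat)) ((2 + r 2%nat) / (1 + r 2%nat)) <= 2).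
    { eapply Rle_trans; [apply Rmin_r|]. apply (Rmult_le_reg_r (1 + r 2%nat)); [lra|].
      unfold Rdiv; rewrite Rmult_assoc, Rinv_l by lra. lra. }
    assert (4 * delta * Rmin (R_L (r 1%nat) (r 2%nat)) ((2 + r 2%nat) / (1 + r 2%nat)) <= 4 * delta * 2)
      by (apply Rmult_le_compat_l; lra).
    lra. }
  assert (HEu0 : En M h delta (u 0%nat) <= E0B).
  { unfold En. eapply Rle_trans; [apply (gsum_le M h _ (fun _ _ => e0))|].
    - intros i j.
      destruct (sample_bounds phi0 (phi1 delta phi0) K0 K1 (tau 1%nat / 2) h (u 0%nat) Hh HK1 ltac:(lra) D0 D1 Hu0 i j)
        as (b1 & b2 & b3).
      assert (Hc : K0 + tau 1%nat / 2 * K1 <= B).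
      { unfold B. assert (tau 1%nat / 2 * K1 <= 4 * delta * K1) by (apply Rmult_le_compat_r; lra). lra. }
      unfold Ep, e0.
      set (a := Dcx h (u 0%nat) i j) in *. set (b := Dcy h (u 0%nat) i j) in *. set (l := Lap_h h (u 0%nat) i j) in *.
      assert (Ha : a ^ 2 <= B ^ 2) by (rewrite <- (pow2_abs a); apply pow_incr; split; [apply Rabs_pos|lra]).
      assert (Hb : b ^ 2 <= B ^ 2) by (rewrite <- (pow2_abs b); apply pow_incr; split; [apply Rabs_pos|lra]).
      assert (Hl : l ^ 2 <= (4 * B) ^ 2) by (rewrite <- (pow2_abs l); apply pow_incr; split; [apply Rabs_pos|lra]).
      assert (H1 : delta / 2 * l ^ 2 <= delta / 2 * (4 * B) ^ 2) by (apply Rmult_le_compat_l; lra).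
      assert (H2 : (a ^ 2 + b ^ 2 - 1) ^ 2 <= (2 * B ^ 2 + 1) ^ 2).
      { pose proof (pow2_ge_0 a); pose proof (pow2_ge_0 b). rewrite <- (pow2_abs (a ^ 2 + b ^ 2 - 1)).
        apply pow_incr; split; [apply Rabs_pos|]. unfold Rabs; destruct (Rcase_abs _); pose proof (pow2_ge_0 B); lra. }
      lra.
    - rewrite (gsum_const M h HM). rewrite HhM. unfold E0B; lra. }
  set (c := fun k => pow32 (r k) / (2 * (1 + r k))).
  assert (Hc0 : forall k, (k <= S N)%nat -> 0 <= c k).
  { intros k Hk; unfold c. apply div_nonneg; [apply pow32_nonneg| pose proof (Hr0 k Hk); lra]. }
  set (W := fun k => gsum M h (fun i j => (u k i j - u (pred k) i j) ^ 2)).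
  assert (HW : forall k, 0 <= W k) by (intros; unfold W; apply (gsum_nonneg M h HM); intros; apply pow2_ge_0).
  set (G := fun k => En M h delta (u k) + c (S k) / tau k * W k).
  assert (Hchain : forall k, (1 <= k <= N)%nat -> G k <= En M h delta (u 0%nat)).
  { induction k as [|k IH]; intros Hk; [lia|].
    pose proof (energy_step M h HM Hh0 delta (u (S k)) (u k) (D2 tau u (S k)) (Hpu (S k) ltac:(lia)) (Hpu k ltac:(lia))
                 (Heq (S k) Hk)) as Hs.
    assert (Htk : 0 < tau (S k)) by (apply Htau; lia).
    assert (HRL : tau (S k) < 4 * delta * R_L (r (S k)) (r (S (S k)))).
    { specialize (Hstep (S k) Hk). fold r in Hstep. pose proof (Rmin_l (R_L (r (S k)) (r (S (S k)))) ((2 + r 2%nat) / (1 + r 2%nat))).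
      assert (4 * delta * Rmin (R_L (r (S k)) (r (S (S k)))) ((2 + r 2%nat) / (1 + r 2%nat)) <= 4 * delta * R_L (r (S k)) (r (S (S k))))
        by (apply Rmult_le_compat_l; lra). lra. }
    assert (Hs2 : 0 <= r (S (S k))) by (apply Hr0; lia).
    destruct k as [|m].
    -
      assert (Hr1 : r 1%nat = 0) by reflexivity. rewrite Hr1 in HRL.
      assert (Hlow : c 2%nat / tau 1%nat * W 1%nat <= gsum M h (fun i j => D2 tau u 1 i j * (u 1%nat i j - u 0%nat i j)
         + delta / 2 * Lap_h h (fun a b => u 1%nat a b - u 0%nat a b) i j ^ 2
         + 1 / 2 * (u 1%nat i j - u 0%nat i j) * Lap_h h (fun a b => u 1%nat a b - u 0%nat a b) i j)).
      { unfold W. rewrite (gsum_scal M h). apply (gsum_le M h); intros i j.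
        pose proof (bdf_pt1 (tau 1%nat) delta (r 2%nat) (u 1%nat i j - u 0%nat i j) (Lap_h h (fun a b => u 1%nat a b - u 0%nat a b) i j) Ht1 Hd Hs2 HRL).
        unfold c; simpl pred; simpl D2. lra. }
      unfold G. simpl pred. lra.
    -
      assert (HGm : G (S m) <= En M h delta (u 0%nat)) by (apply IH; lia).
      assert (Htm : 0 < tau (S m)) by (apply Htau; lia).
      assert (Hrn : r (S (S m)) = tau (S (S m)) / tau (S m)) by (unfold r; rewrite ratio_mid by lia; reflexivity).
      rewrite Hrn in HRL.
      assert (Hlow : c (S (S (S m))) / tau (S (S m)) * W (S (S m)) - c (S (S m)) / tau (S m) * W (S m) <=
         gsum M h (fun i j => D2 tau u (S (S m)) i j * (u (S (S m)) i j - u (S m) i j)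
         + delta / 2 * Lap_h h (fun a b => u (S (S m)) a b - u (S m) a b) i j ^ 2
         + 1 / 2 * (u (S (S m)) i j - u (S m) i j) * Lap_h h (fun a b => u (S (S m)) a b - u (S m) a b) i j)).
      { unfold W. rewrite !(gsum_scal M h), (gsum_minus M h). apply (gsum_le M h); intros i j.
        pose proof (bdf_pt2 (tau (S (S m))) (tau (S m)) delta (r (S (S (S m)))) (u (S (S m)) i j - u (S m) i j)
           (u (S m) i j - u m i j) (Lap_h h (fun a b => u (S (S m)) a b - u (S m) a b) i j) Htk Htm Hd Hs2 HRL).
        unfold c. rewrite Hrn. simpl pred. unfold D2. cbv zeta. lra. }
      unfold G in HGm |- *. lra. }
  assert (HEn : En M h delta (u n) <= E0B).
  { assert (Htn : 0 < tau n) by (apply Htau; lia).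
    assert (0 <= c (S n) / tau n * W n).
    { apply Rmult_le_pos; [apply div_nonneg; [apply Hc0; lia| exact Htn]| apply HW]. }
    pose proof (Hchain n Hn). unfold G in H0. lra. }
  set (v := u n) in *.
  assert (Hlin : forall a b, gsum M h (fun i j => a * Ep h delta v i j + b) = a * En M h delta v + b * L ^ 2).
  { intros a b.
    transitivity (gsum M h (fun i j => a * Ep h delta v i j) + gsum M h (fun _ _ => b)).
    { symmetry; apply (gsum_plus M h (fun i j => a * Ep h delta v i j) (fun _ _ => b)). }
    rewrite <- (gsum_scal M h), (gsum_const M h HM), HhM. unfold En. ring. }
  assert (HEp : forall i j, delta / 2 * Lap_h h v i j ^ 2 <= Ep h delta v i j /\ (Dcx h v i j ^ 2 + Dcy h v i j ^ 2) ^ 2 <= 8 * Ep h delta v i j + 2 /\ Dcx h v i j ^ 2 + Dcy h v i j ^ 2 <= 4 * Ep h delta v i j + 3 / 2).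
  { intros i j. unfold Ep. set (p := Dcx h v i j ^ 2 + Dcy h v i j ^ 2). set (l := Lap_h h v i j).
    assert (0 <= delta / 2 * l ^ 2) by (apply Rmult_le_pos; [lra|apply pow2_ge_0]).
    pose proof (pow2_ge_0 (p - 1)); pose proof (pow2_ge_0 (p - 2)).
    split; [|split]; nra. }
  assert (B1 : gsum M h (fun i j => Lap_h h v i j ^ 2) <= 2 * E0B / delta).
  { assert (delta / 2 * gsum M h (fun i j => Lap_h h v i j ^ 2) <= E0B).
    { rewrite (gsum_scal M h). eapply Rle_trans; [|exact HEn]. apply (gsum_le M h); intros; apply HEp. }
    apply (Rmult_le_reg_l (delta / 2)); [lra|]. replace (delta / 2 * (2 * E0B / delta)) with E0B by (field; lra). exact H. }
  assert (B2 : gsum M h (fun i j => (Dcx h v i j ^ 2 + Dcy h v i j ^ 2) ^ 2) <= 8 * E0B + 2 * L ^ 2).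
  { eapply Rle_trans; [apply (gsum_le M h _ (fun i j => 8 * Ep h delta v i j + 2)); intros; apply HEp|].
    rewrite Hlin. lra. }
  assert (B3 : gsum M h (fun i j => Dcx h v i j ^ 2 + Dcy h v i j ^ 2) <= (8 * E0B + 3 * L ^ 2) / 2).
  { eapply Rle_trans; [apply (gsum_le M h _ (fun i j => 4 * Ep h delta v i j + 3 / 2)); intros; apply HEp|].
    rewrite Hlin. lra. }
  assert (N1 : norm_grad M h v <= sqrt ((8 * E0B + 3 * L ^ 2) / 2)) by (apply sqrt_le_1_alt; exact B3).
  assert (N2 : norm4_grad M h v <= sqrt (sqrt (8 * E0B + 2 * L ^ 2))) by (apply sqrt_le_1_alt, sqrt_le_1_alt; exact B2).
  assert (N3 : norm_lap M h v <= sqrt (2 * E0B / delta)) by (apply sqrt_le_1_alt; exact B1).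
  pose proof (sqrt_pos (2 * E0B / delta)). pose proof (sqrt_pos (sqrt (8 * E0B + 2 * L ^ 2))).
  pose proof (sqrt_pos ((8 * E0B + 3 * L ^ 2) / 2)).
  apply Rmax_lub; [lra| apply Rmax_lub; lra].
Qed.
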